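(* Let $\mathcal{C}\subseteq\mathbb{F}_q^n$ be a GQC code with orbit lengths $l_1,\dots,l_m$, let $\mathcal{H}=\{h_1,\dots,h_m\}$ be a Gröbner basis of $\overline{\mathcal{C}^\perp}$ (elements regarded in $M$ via $\pi$), and let $u\in M$. Then $\langle h_i,u\rangle\equiv 0$ (modulo $t^l-1$, with $l$ as in the definition of the scalar product) for all $1\le i\le m$ if and only if $u$ corresponds to a codeword of $\mathcal{C}$, i.e. $u\in\mathcal{C}$.
   Context: Let $q$ be a prime power. A linear code $\mathcal{C}\subseteq\mathbb{F}_q^n$ is a generalized quasi-cyclic (GQC) code with orbit lengths $l_1,\dots,l_m$ ($m<n$, $l_1+\dots+l_m=n$) if, writing each codeword as $c=(c_1,\dots,c_m)$ with blocks $c_i=(c_{i,0},\dots,c_{i,l_i-1})$ of length $l_i$, $\mathcal{C}$ is closed under the simultaneous local cyclic shift sending each block $c_i$ to $(c_{i,l_i-1},c_{i,0},\dots,c_{i,l_i-2})$. Identify $c$ with $(c_1(t),\dots,c_m(t))\in M:=\bigoplus_{i=1}^m\mathbb{F}_q[t]/(t^{l_i}-1)$, $c_i(t)=\sum_j c_{i,j}t^j$; then $\mathcal{C}$ is an $\mathbb{F}_q[t]$-submodule of $M$. Elements of $\mathbb{F}_q[t]/(t^{l_i}-1)$ are identified with their representatives of degree $<l_i$. Let $\pi:\mathbb{F}_q[t]^m\to M$ be the natural projection. The dual code $\mathcal{C}^\perp$ (standard bilinear form) is GQC with the same orbit lengths, and $\overline{\mathcal{C}^\perp}:=\pi^{-1}(\mathcal{C}^\perp)\subseteq\mathbb{F}_q[t]^m$;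 a Gröbner basis is taken with respect to any monomial ordering on $\mathbb{F}_q[t]^m$. For $a(t)=\sum_{j=0}^{l-1}a_jt^j\in\mathbb{F}_q[t]/(t^l-1)$ put $\widehat{a}(t):=a_0+a_{l-1}t+\dots+a_1t^{l-1}$. For $u,v\in M$ the scalar product is $\langle u,v\rangle:=\sum_{i=1}^m u_i(t)\widehat{v}_i(t)\sum_{k=0}^{l/l_i-1}t^{kl_i}\bmod(t^l-1)$, with $\widehat{v}_i$ computed in $\mathbb{F}_q[t]/(t^{l_i}-1)$ and $l$ the least common multiple of those $l_i$ for which both $u_i$ and $v_i$ are nonzero. *)

(* Defs.v *)
From HB Require Import structures.
From mathcomp Require Import all_boot all_order all_algebra.
Set Implicit Arguments. Unset Strict Implicit. Unset Printing Implicit Defensive.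
Import GRing.Theory.
Local Open Scope ring_scope.

Section GQC.
Variables (F : fieldType) (m : nat) (l : 'I_m -> nat).

(* Elements of F_q[t]^m (and, with degree bounds, of M). *)
Definition vec := {ffun 'I_m -> {poly F}}.

(* u lies in M = ⊕ F[t]/(t^{l_i}-1), identified with representatives of degree < l_i *)
Definition inM (u : vec) : Prop := forall i, (size (u i) <= l i)%N.

Definition piM (f : vec) : vec := [ffun i => f i %% ('X^(l i) - 1)].

Definition gqc_shift (c : vec) : vec :=
  [ffun i => \poly_(j < l i) (c i)`_((j + l i - 1) %% l i)].

(* linear code in F_q^n (n = sum l_i) written in block form *)
Definition linear_code (C : vec -> Prop) : Prop :=
  (forall c, C c -> inM c) /\ C 0 /\
  (forall (a : F) c d, C c -> C d -> C [ffun i => a *: c i + d i]).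

Definition GQC_code (C : vec -> Prop) : Prop :=
  linear_code C /\ (forall c, C c -> C (gqc_shift c)).

Definition std_form (c d : vec) : F :=
  \sum_(i < m) \sum_(j < l i) (c i)`_j * (d i)`_j.

Definition dual_code (C : vec -> Prop) (d : vec) : Prop :=
  inM d /\ forall c, C c -> std_form c d = 0.

Definition dual_preimage (C : vec -> Prop) (f : vec) : Prop :=
  dual_code C (piM f).

(* Monomials of F[t]^m are t^a e_i, encoded as (a, i). *)
Definition monomial := (nat * 'I_m)%type.

Definition monomial_order (lt : monomial -> monomial -> Prop) : Prop :=
  (forall x, ~ lt x x) /\
  (forall x y z, lt x y -> lt y z -> lt x z) /\
  (forall x y, x <> y -> lt x y \/ lt y x) /\
  well_founded lt /\
  (forall a b c (i j : 'I_m), lt (a, i) (b, j) -> lt (a + c, i)%N (b + c, j)%N).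

Definition is_LM (lt : monomial -> monomial -> Prop) (f : vec) (x : monomial) : Prop :=
  (f x.2)`_x.1 != 0 /\
  forall y : monomial, (f y.2)`_y.1 != 0 -> y = x \/ lt y x.

Definition groebner_basis (lt : monomial -> monomial -> Prop) (N : vec -> Prop)
    (k : nat) (G : 'I_k -> vec) : Prop :=
  (forall r, N (G r)) /\
  forall f, N f -> f != 0 ->
    exists r, exists x y : monomial,
      [/\ is_LM lt (G r) x, is_LM lt f y, x.2 = y.2 & (x.1 <= y.1)%N].

Definition polyhat (n : nat) (a : {poly F}) : {poly F} :=
  \poly_(j < n) a`_((n - j) %% n).

Definition sp_len (u v : vec) : nat :=
  \big[lcmn/1%N]_(i < m | (u i != 0) && (v i != 0)) l i.

Definition scalar_prod (u v : vec) : {poly F} :=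
  let L := sp_len u v in
  (\sum_(i < m) u i * polyhat (l i) (v i) *
     \sum_(k < L %/ l i) 'X^(k * l i)) %% ('X^L - 1).

End GQC.

(* Main.v *)
Require Import Defs.
From HB Require Import structures.
From mathcomp Require Import all_boot all_order all_algebra.
From mathcomp Require Import zify ring.
From Stdlib Require Import Lia ClassicalEpsilon.
Import GRing.Theory.
Local Open Scope ring_scope.
Set Implicit Arguments. Unset Strict Implicit. Unset Printing Implicit Defensive.

Lemma coef_shift (F : fieldType) m (l : 'I_m -> nat) (c : vec F m) i j :
  (gqc_shift l c i)`_j = if (j < l i)%N then (c i)`_((j + l i - 1) %% l i) else 0.
Proof. by rewrite /gqc_shift ffunE coef_poly. Qed.

Lemma coef_iter_shift (F : fieldType) m (l : 'I_m -> nat) (c : vec F m) k i j :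
  (0 < l i)%N -> (j < l i)%N ->
  (iter k (gqc_shift l) c i)`_j = (c i)`_((j + k * (l i).-1) %% l i).
Proof.
move=> li0; elim: k j => [|k IH] j hj.
  by rewrite /= mul0n addn0 modn_small.
rewrite iterS coef_shift hj IH ?ltn_pmod //.
congr (_`_ _); rewrite modnDml; apply: (congr1 (modn^~ (l i))).
rewrite mulSn; lia.
Qed.

Lemma inM_shift (F : fieldType) m (l : 'I_m -> nat) (c : vec F m) : inM l (gqc_shift l c).
Proof. move=> i; rewrite ffunE; exact: size_poly. Qed.

Lemma inM_iter (F : fieldType) m (l : 'I_m -> nat) (c : vec F m) k :
  inM l c -> inM l (iter k (gqc_shift l) c).
Proof. by case: k => //= k _; apply: inM_shift. Qed.

Lemma coef_inM (F : fieldType) m (l : 'I_m -> nat) (c : vec F m) i j :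
  inM l c -> (l i <= j)%N -> (c i)`_j = 0.
Proof. by move=> hc hj; apply: nth_default; apply: leq_trans (hc i) hj. Qed.

Lemma iter_shift_period (F : fieldType) m (l : 'I_m -> nat) (c : vec F m) P :
  (forall i, 0 < l i)%N -> inM l c -> (forall i, l i %| P)%N ->
  iter P (gqc_shift l) c = c.
Proof.
move=> hl hc hP; apply/ffunP => i; apply/polyP => j.
case: (ltnP j (l i)) => hj.
  rewrite coef_iter_shift //; congr (_`_ _).
  have [q ->] := dvdnP (hP i).
  by rewrite mulnAC addnC modnMDl modn_small.
by rewrite (@coef_inM _ _ l _ i j (inM_iter P hc) hj) (@coef_inM _ _ l c i j hc hj).
Qed.

Lemma std_shift (F : fieldType) m (l : 'I_m -> nat) (c d : vec F m) :
  std_form l (gqc_shift l c) (gqc_shift l d) = std_form l c d.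
Proof.
rewrite /std_form; apply: eq_bigr => i _.
rewrite [RHS](reindex_inj (@ord_pred_inj (l i))) /=.
apply: eq_bigr => j _; rewrite !coef_shift ltn_ord /=.
by rewrite subn1.
Qed.

Lemma std_iter (F : fieldType) m (l : 'I_m -> nat) (c d : vec F m) k :
  std_form l (iter k (gqc_shift l) c) (iter k (gqc_shift l) d) = std_form l c d.
Proof. by elim: k => //= k IH; rewrite std_shift. Qed.

Lemma piM_X (F : fieldType) m (l : 'I_m -> nat) (f : vec F m) : (forall i, 0 < l i)%N ->
  piM l [ffun i => 'X * f i] = gqc_shift l (piM l f).
Proof.
move=> hl; apply/ffunP => i; rewrite !ffunE.
set n := l i; set d : {poly F} := 'X^n - 1; set r := f i %% d.
have hn : (0 < n)%N := hl i.
have sd : size d = n.+1 by rewrite size_Xn_sub_1.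
have sr : (size r <= n)%N by rewrite -ltnS -sd ltn_modp -size_poly_eq0 sd.
rewrite {1}(divp_eq (f i) d) mulrDr mulrA modpD modp_mull add0r.
set sh := \poly_(j < n) _.
have E : 'X * r = (r`_(n.-1))%:P * d + sh.
  apply/polyP => j; rewrite coefXM coefD coefCM coefB coefXn coef1 coef_poly.
  case: j => [|j] /=.
    have -> : (0 == n) = false by apply/eqP; lia.
    rewrite hn add0n subn1 modn_small ?prednK ?ltn_predL //.
    by rewrite /= sub0r mulrN1 addNr.
  rewrite subr0.
  case: (ltngtP j.+1 n) => hj /=.
  - rewrite mulr0 add0r; congr (_`_ _).
    have -> : (j.+1 + n - 1 = j + n)%N by lia.
    by rewrite modnDr modn_small //; lia.
  - rewrite mulr0 add0r nth_default //; apply: leq_trans sr _; by rewrite -ltnS.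
  - by rewrite mulr1 addr0 -hj.
rewrite E modp_addl_mul_small // sd ltnS; exact: size_poly.
Qed.

Lemma piM_lin (F : fieldType) m (l : 'I_m -> nat) (a : F) (f g : vec F m) :
  piM l (a *: f + g) = a *: piM l f + piM l g.
Proof. by apply/ffunP => i; rewrite !ffunE modpD modpZl. Qed.

Lemma piM_scale (F : fieldType) m (l : 'I_m -> nat) (a : F) (f : vec F m) :
  piM l (a *: f) = a *: piM l f.
Proof. by apply/ffunP => i; rewrite !ffunE modpZl. Qed.

Lemma piM_add (F : fieldType) m (l : 'I_m -> nat) (f g : vec F m) :
  piM l (f + g) = piM l f + piM l g.
Proof. by apply/ffunP => i; rewrite !ffunE modpD. Qed.

Lemma piM0 (F : fieldType) m (l : 'I_m -> nat) : piM l (0 : vec F m) = 0.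
Proof. by apply/ffunP => i; rewrite !ffunE mod0p. Qed.

Lemma piM_sum (F : fieldType) m (l : 'I_m -> nat) I (r : seq I) (P : pred I) (G : I -> vec F m) :
  piM l (\sum_(i <- r | P i) G i) = \sum_(i <- r | P i) piM l (G i).
Proof. by apply: big_morph; [apply: piM_add | apply: piM0]. Qed.

Lemma piM_Xn (F : fieldType) m (l : 'I_m -> nat) (f : vec F m) k : (forall i, 0 < l i)%N ->
  piM l [ffun i => 'X^k * f i] = iter k (gqc_shift l) (piM l f).
Proof.
move=> hl; elim: k => [|k IH].
  by congr (piM l _); apply/ffunP => i; rewrite ffunE expr0 mul1r.
rewrite iterS -IH -piM_X //; congr (piM l _); apply/ffunP => i.
by rewrite !ffunE exprS mulrA.
Qed.

Lemma piM_mul (F : fieldType) m (l : 'I_m -> nat) (p : {poly F}) (f : vec F m) :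
  (forall i, 0 < l i)%N ->
  piM l [ffun i => p * f i] = \sum_(k < size p) p`_k *: iter k (gqc_shift l) (piM l f).
Proof.
move=> hl.
have -> : [ffun i => p * f i] = \sum_(k < size p) p`_k *: [ffun i => 'X^k * f i].
  apply/ffunP => i; rewrite ffunE sum_ffunE.
  rewrite -[p in LHS]coefK poly_def mulr_suml; apply: eq_bigr => k _.
  by rewrite !ffunE scalerAl.
rewrite piM_sum; apply: eq_bigr => k _.
by rewrite piM_scale piM_Xn.
Qed.

Lemma piM_id (F : fieldType) m (l : 'I_m -> nat) (f : vec F m) :
  (forall i, 0 < l i)%N -> inM l f -> piM l f = f.
Proof.
move=> hl hf; apply/ffunP => i; rewrite ffunE modp_small //.
by rewrite size_Xn_sub_1 // ltnS hf.
Qed.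

Lemma std_add2 (F : fieldType) m (l : 'I_m -> nat) (c d1 d2 : vec F m) :
  std_form l c (d1 + d2) = std_form l c d1 + std_form l c d2.
Proof.
rewrite /std_form -big_split; apply: eq_bigr => i _; rewrite -big_split.
by apply: eq_bigr => j _; rewrite ffunE coefD mulrDr.
Qed.

Lemma std_scale2 (F : fieldType) m (l : 'I_m -> nat) (c d : vec F m) a :
  std_form l c (a *: d) = a * std_form l c d.
Proof.
rewrite /std_form mulr_sumr; apply: eq_bigr => i _; rewrite mulr_sumr.
by apply: eq_bigr => j _; rewrite ffunE coefZ mulrCA.
Qed.

Lemma std_02 (F : fieldType) m (l : 'I_m -> nat) (c : vec F m) :
  std_form l c 0 = 0.
Proof.
rewrite /std_form big1 // => i _; rewrite big1 // => j _.
by rewrite ffunE coef0 mulr0.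
Qed.

Lemma std_sum2 (F : fieldType) m (l : 'I_m -> nat) (c : vec F m) I (r : seq I) (P : pred I) (G : I -> vec F m) :
  std_form l c (\sum_(i <- r | P i) G i) = \sum_(i <- r | P i) std_form l c (G i).
Proof. by apply: big_morph; [apply: std_add2 | apply: std_02]. Qed.

Lemma dual_lin (F : fieldType) m (l : 'I_m -> nat) C (a : F) (d1 d2 : vec F m) :
  dual_code l C d1 -> dual_code l C d2 -> dual_code l C (a *: d1 + d2).
Proof.
move=> [h1 o1] [h2 o2]; split.
  move=> i; rewrite !ffunE; apply: leq_trans (size_add _ _) _.
  by rewrite geq_max h2 andbT (leq_trans (size_scale_leq _ _)).
by move=> c hc; rewrite std_add2 std_scale2 o1 // o2 // mulr0 addr0.
Qed.

Lemma C_iter (F : fieldType) m (l : 'I_m -> nat) (C : vec F m -> Prop) k c :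
  GQC_code l C -> C c -> C (iter k (gqc_shift l) c).
Proof. by move=> [_ hs] hc; elim: k => //= k IH; apply: hs. Qed.

Lemma period_prod m (l : 'I_m -> nat) :
  (forall i, 0 < l i)%N ->
  (0 < \prod_(i < m) l i)%N /\ (forall i, l i %| \prod_(i < m) l i)%N.
Proof.
move=> hl; split; first by rewrite prodn_gt0.
by move=> i; rewrite (bigD1 i) //= dvdn_mulr.
Qed.

Lemma dual_shift (F : fieldType) m (l : 'I_m -> nat) C (d : vec F m) :
  (forall i, 0 < l i)%N -> GQC_code l C -> dual_code l C d -> dual_code l C (gqc_shift l d).
Proof.
move=> hl hC [hd hdo]; split; first exact: inM_shift.
move=> c hc.
have [hP hPd] := period_prod hl.
have hcM : inM l c by case: hC => [[hCM _] _]; apply: hCM.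
rewrite -(iter_shift_period hl hcM hPd) -(prednK hP) iterS std_shift.
by apply: hdo; apply: C_iter.
Qed.

Lemma dual_iter (F : fieldType) m (l : 'I_m -> nat) C (d : vec F m) k :
  (forall i, 0 < l i)%N -> GQC_code l C -> dual_code l C d ->
  dual_code l C (iter k (gqc_shift l) d).
Proof. by move=> hl hC hd; elim: k => //= k IH; apply: dual_shift. Qed.

Lemma D_lin (F : fieldType) m (l : 'I_m -> nat) C (a : F) (f g : vec F m) :
  dual_preimage l C f -> dual_preimage l C g -> dual_preimage l C (a *: f + g).
Proof. by rewrite /dual_preimage piM_lin; apply: dual_lin. Qed.

Lemma D_Xn (F : fieldType) m (l : 'I_m -> nat) C (f : vec F m) k :
  (forall i, 0 < l i)%N -> GQC_code l C ->
  dual_preimage l C f -> dual_preimage l C [ffun i => 'X^k * f i].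
Proof. by move=> hl hC; rewrite /dual_preimage piM_Xn //; apply: dual_iter. Qed.

Definition combo (F : fieldType) m (H : 'I_m -> vec F m) (f : vec F m) :=
  exists g : 'I_m -> {poly F}, f = [ffun i => \sum_(r < m) g r * H r i].

Lemma combo0 (F : fieldType) m (H : 'I_m -> vec F m) : combo H 0.
Proof.
exists (fun _ => 0); apply/ffunP => i; rewrite !ffunE big1 // => r _.
by rewrite mul0r.
Qed.

Lemma combo_step (F : fieldType) m (H : 'I_m -> vec F m) f (c : F) d r :
  combo H f -> combo H (f + c *: [ffun i => 'X^d * H r i]).
Proof.
move=> [g ->]; exists (fun r' => g r' + (if r' == r then c *: 'X^d else 0)).
apply/ffunP => i; rewrite !ffunE.
under [RHS]eq_bigr do rewrite mulrDl.
rewrite big_split /=; congr (_ + _).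
rewrite (bigD1 r) //= eqxx big1 ?addr0; first by rewrite -scalerAl.
by move=> r' /negbTE ->; rewrite mul0r.
Qed.

Lemma reduce (F : fieldType) m (l : 'I_m -> nat) C lt (H : 'I_m -> vec F m) f :
  (forall i, 0 < l i)%N -> GQC_code l C -> monomial_order lt ->
  groebner_basis lt (dual_preimage l C) H ->
  dual_preimage l C f -> f != 0 ->
  exists f' y, [/\ is_LM lt f y, dual_preimage l C f',
     (forall z : monomial m, (f' z.2)`_z.1 != 0 -> lt z y) & (combo H f' -> combo H f)].
Proof.
move=> hl hC [irr [tr [tot [wf comp]]]] [hHD hG] hf f0.
have [r [[x1 x2] [[y1 y2] [hx hy exy lexy]]]] := hG f hf f0.
rewrite /= in exy lexy; subst x2.
set d := (y1 - x1)%N.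
have hx0 : (H r y2)`_x1 != 0 := hx.1.
set c := (f y2)`_y1 / (H r y2)`_x1.
set g : vec F m := [ffun i => 'X^d * H r i].
exists ((- c) *: g + f), (y1, y2); split => //.
- by apply: D_lin => //; apply: D_Xn => //; apply: hHD.
- move=> [a i] /=; rewrite !ffunE coefD coefZ coefXnM => hz.
  have [eay | nay] := eqVneq (a, i) (y1, y2).
    case: eay hz => -> ->.
    rewrite ltnNge leq_subr /= subKn // /c mulNr divfK // addNr.
    by rewrite eqxx.
  have [f0' | fnz] := eqVneq ((f i)`_a) 0.
    move: hz; rewrite f0' addr0.
    case: ltnP => had; first by rewrite mulr0 eqxx.
    rewrite mulf_eq0 negb_or => /andP [_ hh].
    case: (hx.2 ((a - d)%N, i) hh) => [[ead ei] | hlt'].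
      by move: nay; rewrite ei -(subnK had) ead subnKC // eqxx.
    by have := comp _ _ d _ _ hlt'; rewrite subnK // subnKC.
  case: (hy.2 (a, i) fnz) => // eq.
  by rewrite eq eqxx in nay.
- move=> hc'; have := combo_step c d r hc'.
  by rewrite -/g addrAC scaleNr addNr add0r.
Qed.

Lemma groebner_combo (F : fieldType) m (l : 'I_m -> nat) C lt (H : 'I_m -> vec F m) :
  (forall i, 0 < l i)%N -> GQC_code l C -> monomial_order lt ->
  groebner_basis lt (dual_preimage l C) H ->
  forall f, dual_preimage l C f -> combo H f.
Proof.
move=> hl hC hlt hH.
have wf : well_founded lt by case: hlt => [_ [_ [_ [wf _]]]].
have step : forall x f, dual_preimage l C f ->
    (forall z : monomial m, (f z.2)`_z.1 != 0 -> lt z x) -> combo H f.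
  move=> x; elim/(well_founded_ind wf): x => x IH f hf hb.
  have [-> | f0] := eqVneq f 0; first exact: combo0.
  have [f' [y [hy hf' hb' himp]]] := reduce hl hC hlt hH hf f0.
  by apply: himp; apply: (IH y) => //; apply: hb; case: hy.
move=> f hf; have [-> | f0] := eqVneq f 0; first exact: combo0.
have [f' [y [hy hf' hb' himp]]] := reduce hl hC hlt hH hf f0.
by apply: himp; apply: step hf' hb'.
Qed.

Lemma modp_sum (F : fieldType) (d : {poly F}) I (r : seq I) (P : pred I) (G : I -> {poly F}) :
  (\sum_(i <- r | P i) G i) %% d = \sum_(i <- r | P i) (G i %% d).
Proof. exact: (big_morph _ (modpD d) (mod0p d)). Qed.

Lemma Xn_mod (F : fieldType) n j : (0 < n)%N ->
  ('X^j : {poly F}) %% ('X^n - 1) = 'X^(j %% n).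
Proof.
move=> hn.
set q := (j %/ n)%N; set r := (j %% n)%N.
set S := \sum_(i < q) ('X^n : {poly F}) ^+ (q.-1 - i) * 1 ^+ i.
have h1 : ('X^n : {poly F}) ^+ q - 1 = ('X^n - 1) * S by rewrite /S -subrXX expr1n.
have -> : ('X^j : {poly F}) = (S * 'X^r) * ('X^n - 1) + 'X^r.
  have -> : ('X^j : {poly F}) = ('X^n) ^+ q * 'X^r.
    by rewrite -exprM -exprD mulnC -divn_eq.
  have -> : ('X^n : {poly F}) ^+ q = ('X^n - 1) * S + 1 by rewrite -h1 subrK.
  ring.
rewrite modp_addl_mul_small // size_Xn_sub_1 // size_polyXn ltnS.
exact: ltn_pmod.
Qed.

Lemma poly_exp_small (F : fieldType) n (h : {poly F}) : (size h <= n)%N ->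
  h = \sum_(a < n) h`_a *: 'X^a.
Proof.
move=> sh; rewrite -poly_def; apply/polyP => k; rewrite coef_poly.
by case: ltnP => // hk; rewrite nth_default // (leq_trans sh hk).
Qed.

Lemma conv_coef (F : fieldType) n (h u : {poly F}) t :
  (0 < n)%N -> (size h <= n)%N -> (t < n)%N ->
  ((h * polyhat n u) %% ('X^n - 1))`_t = \sum_(a < n) h`_a * u`_((a + (n - t)) %% n).
Proof.
move=> hn sh ht.
have E : h * polyhat n u =
    \sum_(a < n) \sum_(b < n) (h`_a * u`_((n - b) %% n)) *: 'X^(a + b).
  rewrite {1}(poly_exp_small sh) /polyhat poly_def mulr_suml; apply: eq_bigr => a _.
  rewrite mulr_sumr; apply: eq_bigr => b _.
  by rewrite -scalerAl -scalerAr scalerA exprD.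
rewrite E modp_sum coef_sum; apply: eq_bigr => a _.
rewrite modp_sum coef_sum.
under eq_bigr do rewrite modpZl coefZ Xn_mod // coefXn -mulrA.
rewrite -mulr_sumr; congr (_ * _).
have hb0 : ((t + (n - a)) %% n < n)%N by apply: ltn_pmod.
set b0 := Ordinal hb0.
have hab0 : ((a + b0) %% n = t)%N.
  rewrite /= modnDmr.
  have -> : (a + (t + (n - a)) = t + n)%N by have := ltn_ord a; lia.
  by rewrite modnDr modn_small.
rewrite (bigD1 b0) // big1 ?addr0.
  rewrite /= addr0 hab0 eqxx mulr1; congr (nth _ u _).
  apply/eqP; rewrite -(eqn_modDr b0) subnK; last exact: ltnW.
  rewrite /= modnDmr.
  have -> : (a + (n - t) + (t + (n - a)) = 2 * n)%N by have := ltn_ord a; lia.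
  by rewrite modnn modnMl.
move=> b /= hb.
have -> : (t == (a + b) %% n)%N = false.
  apply/negP => /eqP htb; move/negP: hb; apply; apply/eqP; apply: val_inj => /=.
  rewrite -(modn_small (ltn_ord b)) -(modn_small hb0); apply/eqP.
  by rewrite -(eqn_modDl a) -htb hab0.
by rewrite mulr0.
Qed.

Lemma block_coef (F : fieldType) n L (r : {poly F}) s :
  (0 < n)%N -> (n %| L)%N -> (size r <= n)%N ->
  (r * \sum_(k < L %/ n) 'X^(k * n))`_s = if (s < L)%N then r`_(s %% n) else 0.
Proof.
move=> hn hnL sr.
rewrite mulr_sumr coef_sum.
have key : forall k : 'I_(L %/ n),
    (r * 'X^(k * n))`_s = if (k == (s %/ n)%N :> nat) then r`_(s %% n) else 0.
  move=> k; rewrite coefMXn.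
  case: ltnP => hks.
    case: eqP => // hk; exfalso.
    by rewrite hk ltnNge leq_trunc_div in hks.
  case: eqP => hk.
    by rewrite hk {1}(divn_eq s n) addKn.
  case: (ltnP (s - k * n) n) => h; last exact: nth_default (leq_trans sr h).
  exfalso; apply: hk.
  have e : s = (k * n + (s - k * n))%N by rewrite subnKC.
  by rewrite [in RHS]e divnMDl // (divn_small h) addn0.
rewrite (eq_bigr _ (fun k _ => key k)).
case: ltnP => hsL.
  have hk0 : (s %/ n < L %/ n)%N by rewrite ltn_divLR // divnK.
  rewrite (bigD1 (Ordinal hk0)) //= eqxx big1 ?addr0 // => k hk.
  rewrite ifN //; apply/negP => /eqP e; move/negP: hk; apply.
rewrite big1 // => k _; rewrite ifN //; apply/eqP => e.
have := ltn_ord k; rewrite e ltn_divLR // divnK //.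
by rewrite ltnNge hsL.
Qed.

Lemma sum_tele (F : fieldType) n q :
  (('X^n - 1) * \sum_(k < q) 'X^(k * n) : {poly F}) = 'X^(q * n) - 1.
Proof.
elim: q => [|q IH]; first by rewrite big_ord0 mulr0 mul0n expr0 subrr.
rewrite big_ord_recr /= mulrDr IH mulSn exprD; ring.
Qed.

Lemma term_mod (F : fieldType) n L (p : {poly F}) :
  (0 < n)%N -> (n %| L)%N -> (0 < L)%N ->
  (p * \sum_(k < L %/ n) 'X^(k * n)) %% ('X^L - 1)
  = (p %% ('X^n - 1)) * \sum_(k < L %/ n) 'X^(k * n).
Proof.
move=> hn hnL hL.
set S := \sum_(k < L %/ n) _; set r := p %% _.
have hdS : ('X^n - 1) * S = 'X^L - 1 by rewrite sum_tele divnK.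
have sr : (size r <= n)%N.
  by rewrite -ltnS -(size_Xn_sub_1 F hn) ltn_modp -size_poly_eq0 size_Xn_sub_1.
rewrite {1}(divp_eq p ('X^n - 1)) mulrDl -mulrA hdS modp_addl_mul_small //.
rewrite size_Xn_sub_1 // ltnS.
apply/leq_sizeP => s hs; rewrite block_coef //.
by rewrite ltnNge hs.
Qed.

Lemma polyhat0 (F : fieldType) n : polyhat n (0 : {poly F}) = 0.
Proof. by apply/polyP => j; rewrite /polyhat coef_poly !coef0 if_same. Qed.

Lemma idx_eq l a s : (0 < l)%N ->
  ((a + s * l.-1) %% l = (a + (l - s %% l)) %% l)%N.
Proof.
move=> hl; apply/eqP; rewrite -(eqn_modDr (s %% l)).
rewrite -[(a + (l - s %% l) + s %% l)%N]addnA subnK; last exact: ltnW (ltn_pmod _ hl).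
rewrite modnDr modnDmr.
have e : (s * l = s * l.-1 + s)%N by rewrite -{1}(prednK hl) mulnSr.
by rewrite -addnA -e addnC modnMDl.
Qed.

Definition Wf (F : fieldType) m (l : 'I_m -> nat) (h u : vec F m) (s : nat) : F :=
  \sum_(i < m) (if (h i != 0) && (u i != 0) then
     \sum_(a < l i) (h i)`_a * (u i)`_((a + (l i - s %% l i)) %% l i) else 0).

Lemma std_W (F : fieldType) m (l : 'I_m -> nat) (h u : vec F m) s :
  (forall i, 0 < l i)%N ->
  std_form l (iter s (gqc_shift l) u) h = Wf l h u s.
Proof.
move=> hl; rewrite /std_form /Wf; apply: eq_bigr => i _.
case: ifP => [/andP [hh hu] | hnz].
  apply: eq_bigr => a _; rewrite coef_iter_shift // idx_eq // mulrC.
  by [].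
apply: big1 => a _; move/negbT: hnz; rewrite negb_and !negbK => /orP [] /eqP h0.
  by rewrite h0 coef0 mulr0.
by rewrite coef_iter_shift // h0 coef0 mul0r.
Qed.

Lemma W_mod (F : fieldType) m (l : 'I_m -> nat) (h u : vec F m) s :
  Wf l h u s = Wf l h u (s %% sp_len l h u).
Proof.
rewrite /Wf; apply: eq_bigr => i _; case: ifP => // hnz.
have hd : (l i %| sp_len l h u)%N by apply: (biglcmn_sup i hnz); apply: dvdnn.
by rewrite (modn_dvdm _ hd).
Qed.

Lemma sp_len_gt0 (F : fieldType) m (l : 'I_m -> nat) (h u : vec F m) :
  (forall i, 0 < l i)%N -> (0 < sp_len l h u)%N.
Proof.
move=> hl; rewrite /sp_len; apply: (big_ind (fun x => 0 < x)%N) => //= x y hx hy.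
by rewrite lcmn_gt0 hx hy.
Qed.

Lemma scalar_coef (F : fieldType) m (l : 'I_m -> nat) (h u : vec F m) s :
  (forall i, 0 < l i)%N -> inM l h -> (s < sp_len l h u)%N ->
  (scalar_prod l h u)`_s = Wf l h u s.
Proof.
move=> hl hh hs; rewrite /scalar_prod /= modp_sum coef_sum /Wf.
apply: eq_bigr => i _; case: ifP => [hnz | hnz].
  have hd : (l i %| sp_len l h u)%N by apply: (biglcmn_sup i hnz); apply: dvdnn.
  rewrite term_mod // ?sp_len_gt0 // block_coef // ?hs; last first.
    by rewrite -ltnS -(size_Xn_sub_1 F (hl i)) ltn_modp -size_poly_eq0 size_Xn_sub_1.
  by rewrite conv_coef // ltn_pmod.
move/negbT: hnz; rewrite negb_and !negbK => /orP [] /eqP h0.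
  by rewrite h0 !mul0r mod0p coef0.
by rewrite h0 polyhat0 mulr0 mul0r mod0p coef0.
Qed.

Lemma scalar_zero_iff (F : fieldType) m (l : 'I_m -> nat) (h u : vec F m) :
  (forall i, 0 < l i)%N -> inM l h ->
  scalar_prod l h u = 0 <-> forall s, std_form l (iter s (gqc_shift l) u) h = 0.
Proof.
move=> hl hh; have hL := sp_len_gt0 h u hl; split.
  move=> h0 s; rewrite std_W // W_mod -scalar_coef // ?ltn_pmod //.
  by rewrite h0 coef0.
move=> hs; apply/polyP => s; rewrite coef0.
case: (ltnP s (sp_len l h u)) => hsl.
  by rewrite scalar_coef // -std_W.
apply: nth_default; apply: leq_trans hsl.
rewrite /scalar_prod /= -ltnS -(size_Xn_sub_1 F hL) ltn_modp.
by rewrite -size_poly_eq0 size_Xn_sub_1.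
Qed.

Definition Tix m (l : 'I_m -> nat) := {i : 'I_m & 'I_(l i)}.
Definition toR (F : fieldType) m (l : 'I_m -> nat) (c : vec F m) : 'rV[F]_#|{: Tix l}| :=
  \row_k (let p : Tix l := enum_val k in (c (tag p))`_(tagged p)).
Definition ofR (F : fieldType) m (l : 'I_m -> nat) (x : 'rV[F]_#|{: Tix l}|) : vec F m :=
  [ffun i => \sum_(j < l i) x 0 (enum_rank (Tagged (fun i => 'I_(l i)) j)) *: 'X^j].

Lemma coef_ofR (F : fieldType) m (l : 'I_m -> nat) x i (j : 'I_(l i)) :
  (@ofR F m l x i)`_j = x 0 (enum_rank (Tagged (fun i => 'I_(l i)) j)).
Proof.
rewrite ffunE coef_sum (bigD1 j) //= coefZ coefXn eqxx mulr1 big1 ?addr0 // => k hk.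
rewrite coefZ coefXn; case: eqP => [e|]; last by rewrite mulr0.
by case/negP: hk; apply/eqP/val_inj.
Qed.

Lemma inM_ofR (F : fieldType) m (l : 'I_m -> nat) x : inM l (@ofR F m l x).
Proof.
move=> i; apply/leq_sizeP => k hk; rewrite ffunE coef_sum big1 // => j _.
rewrite coefZ coefXn; case: eqP => [e|]; last by rewrite mulr0.
by have := ltn_ord j; rewrite -e ltnNge hk.
Qed.

Lemma toR_ofR (F : fieldType) m (l : 'I_m -> nat) x : toR l (@ofR F m l x) = x.
Proof.
apply/rowP => k; rewrite mxE /= (coef_ofR x (tagged (enum_val k))).
have -> : Tagged (fun i => 'I_(l i)) (tagged (enum_val k)) = enum_val k by case: (enum_val k).
by rewrite enum_valK.
Qed.

Lemma ofR_toR (F : fieldType) m (l : 'I_m -> nat) (c : vec F m) : inM l c -> ofR (toR l c) = c.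
Proof.
move=> hc; apply/ffunP => i; apply/polyP => j.
case: (ltnP j (l i)) => hj.
  by rewrite (coef_ofR _ (Ordinal hj)) mxE enum_rankK.
by rewrite (coef_inM (inM_ofR _) hj) (coef_inM hc hj).
Qed.

Lemma std_toR (F : fieldType) m (l : 'I_m -> nat) (c d : vec F m) :
  std_form l c d = \sum_k toR l c 0 k * toR l d 0 k.
Proof.
rewrite /std_form (sig_big_dep (fun _ => true) (fun _ _ => true)) /=.
rewrite [RHS](reindex (@enum_rank (Tix l))); last first.
  by apply: onW_bij; apply: enum_rank_bij.
by apply: eq_bigr => p _; rewrite !mxE /= enum_rankK.
Qed.

Lemma C_lin (F : fieldType) m (l : 'I_m -> nat) C (a : F) (c d : vec F m) :
  linear_code l C -> C c -> C d -> C (a *: c + d).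
Proof.
move=> [_ [_ hl]] hc hd.
have -> : a *: c + d = [ffun i => a *: c i + d i] by apply/ffunP => i; rewrite !ffunE.
exact: hl.
Qed.

Lemma ofR_lin (F : fieldType) m (l : 'I_m -> nat) (a : F) x y :
  @ofR F m l (a *: x + y) = a *: ofR x + ofR y.
Proof.
apply/ffunP => i; rewrite !ffunE scaler_sumr -big_split; apply: eq_bigr => j _.
by rewrite !mxE scalerDl scalerA.
Qed.

Lemma ofR0 (F : fieldType) m (l : 'I_m -> nat) : @ofR F m l 0 = 0.
Proof.
apply/ffunP => i; rewrite !ffunE big1 // => j _.
by rewrite mxE scale0r.
Qed.

Lemma double_dual (F : finFieldType) m (l : 'I_m -> nat) C (u : vec F m) :
  linear_code l C -> inM l u -> (forall d, dual_code l C d -> std_form l u d = 0) -> C u.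
Proof.
move=> hC hu hdual.
have hCM : forall c, C c -> inM l c by case: hC.
have hC0 : C 0 by case: hC => _ [].
pose n := #|{: Tix l}|.
pose dec (x : 'rV[F]_n) : bool :=
  if excluded_middle_informative (C (ofR x)) then true else false.
have decP : forall x, dec x = true <-> C (ofR x).
  by move=> x; rewrite /dec; case: excluded_middle_informative.
pose S := [set x | dec x].
pose A : 'M[F]_(#|S|, n) := \matrix_(r, k) (enum_val r : 'rV[F]_n) 0 k.
have rowA : forall r, row r A = enum_val r by move=> r; apply/rowP => k; rewrite !mxE.
have subA : forall x, C (ofR x) -> (x <= A)%MS.
  move=> x hx; have xS : x \in S by rewrite inE; apply/decP.
  rewrite -(enum_rankK_in xS xS) -rowA; exact: row_sub.
have Aclosed : forall x, (x <= A)%MS -> C (ofR x).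
  move=> x /submxP [w ->]; rewrite mulmx_sum_row.
  apply: (big_ind (fun y => C (ofR y))).
  - by rewrite ofR0.
  - by move=> y z hy hz; rewrite -[y]scale1r ofR_lin; exact: C_lin hC hy hz.
  - move=> r _; rewrite -[_ *: _]addr0 ofR_lin ofR0; apply: C_lin hC _ hC0.
    by rewrite rowA; have := enum_valP r; rewrite inE => /decP.
pose K := kermx A^T.
have hK : forall k, dual_code l C (ofR (row k K)).
  move=> k; split; first exact: inM_ofR.
  move=> c hc; rewrite std_toR toR_ofR.
  have := subA (toR l c); rewrite (ofR_toR (hCM c hc)) => /(_ hc) /submxP [w hw].
  have e0 : row k K *m A^T = 0 by rewrite -row_mul mulmx_ker row0.
  have e1 : A *m (row k K)^T = 0 by rewrite -[A]trmxK -trmx_mul e0 trmx0.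
  have e2 : (w *m A *m (row k K)^T) 0 0 = 0 by rewrite -mulmxA e1 mulmx0 mxE.
  rewrite hw -[RHS]e2 mxE; apply: eq_bigr => j _; by rewrite !mxE.
have huK : toR l u *m K^T = 0.
  apply/rowP => k; rewrite !mxE.
  apply: etrans (hdual _ (hK k)); rewrite std_toR toR_ofR.
  by apply: eq_bigr => j _; rewrite !mxE.
have hsub : (toR l u <= kermx K^T)%MS by apply/sub_kermxP.
have AK : (A <= kermx K^T)%MS.
  by apply/sub_kermxP; rewrite -[A]trmxK -trmx_mul mulmx_ker trmx0.
have rk : \rank (kermx K^T) = \rank A.
  by rewrite mxrank_ker mxrank_tr mxrank_ker mxrank_tr subKn // rank_leq_col.
have KA : (kermx K^T <= A)%MS.
  by case: (mxrank_leqif_sup AK) => _ <-; rewrite rk.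
by rewrite -(ofR_toR hu); apply: Aclosed; apply: submx_trans hsub KA.
Qed.

Unset Implicit Arguments.

Theorem corollary1 (F : finFieldType) (m : nat) (l : 'I_m -> nat)
    (hl : forall i, (0 < l i)%N) (hmn : (m < \sum_(i < m) l i)%N)
    (C : vec F m -> Prop) (hC : GQC_code l C)
    (lt : monomial m -> monomial m -> Prop) (hlt : monomial_order lt)
    (H : 'I_m -> vec F m) (hH : groebner_basis lt (dual_preimage l C) H)
    (u : vec F m) (hu : inM l u) :
  (forall i : 'I_m, scalar_prod l (piM l (H i)) u = 0) <-> C u.
Proof.
have hlin : linear_code l C by case: hC.
have hhM : forall i, inM l (piM l (H i)) by move=> i; case: (hH.1 i).
split.
- move=> hs; apply: (double_dual hlin hu) => d hd.
  have Q : forall r k, std_form l u (iter k (gqc_shift l) (piM l (H r))) = 0.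
    move=> r k.
    have h0 := (scalar_zero_iff u hl (hhM r)).1 (hs r).
    have [hP hPd] := period_prod hl.
    set P := (\prod_(i < m) l i)%N in hP hPd.
    have e : iter k (gqc_shift l) (iter (k * P - k) (gqc_shift l) u) = u.
      rewrite -iterD subnKC; last by rewrite leq_pmulr.
      by apply: iter_shift_period => // i; apply: dvdn_mull.
    by rewrite -{1}e std_iter.
  have hdD : dual_preimage l C d by rewrite /dual_preimage piM_id //; case: hd.
  have [g hg] := groebner_combo hl hC hlt hH hdD.
  have hdM : inM l d by case: hd.
  rewrite -(piM_id hl hdM) hg.
  have -> : [ffun i => \sum_(r < m) g r * H r i] = \sum_(r < m) [ffun i => g r * H r i].
    by apply/ffunP => i; rewrite ffunE sum_ffunE; apply: eq_bigr => r _; rewrite ffunE.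
  rewrite piM_sum std_sum2 big1 // => r _.
  rewrite piM_mul // std_sum2 big1 // => k _.
  by rewrite std_scale2 Q mulr0.
- move=> hCu i; apply/(scalar_zero_iff u hl (hhM i)) => s.
  exact: (hH.1 i).2 _ (C_iter s hC hCu).
Qed.
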